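(* Let $p$ be an odd prime and $k\ge0$. Call a pair $(B,C)\in\mathbb{Z}_p^2$ admissible if $p^k\mid B$, $p^{k+1}\nmid B$ and $p^{k+1}\mid C$. (1) Let $A,A'\in\mathbb{Z}_p$, let $(B,C)$ and $(B',C')$ be admissible, and assume $p\nmid A^2-C^2$ and $p\nmid A'^2-C'^2$. If $f_{(A,B,C)}\equiv f_{(A',B',C')}\pmod{p^{2k+4}}$, then $A\equiv A'\pmod{p^{2k+2}}$. (2) Fix $A,A'\in\mathbb{Z}_p$ and an admissible pair $(B,C)$, with $p\nmid A^2-C^2$ and $A\equiv A'\pmod{p^{2k+2}}$. Then there is exactly one residue class $h\in(\mathbb{Z}/p^{2k+4}\mathbb{Z})[x]$ for which the following holds: there exists an admissible pair $(B',C')$ with $p^2(B'x+C')^2\equiv h\pmod{p^{2k+4}}$ and $f_{(A,B,C)}\equiv f_{(A',B',C')}\pmod{p^{2k+4}}$.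
   Context: For $A,B,C\in\mathbb{Z}_p$, define $f_{(A,B,C)}(x)=(x^2+pA)^2-p^2(Bx+C)^2\in\mathbb{Z}_p[x]$. Congruences of polynomials are coefficientwise. *)

(* Defs.v *)
From HB Require Import structures.
From mathcomp Require Import boolp.
From mathcomp Require Import all_boot all_order all_algebra.
Set Implicit Arguments. Unset Strict Implicit. Unset Printing Implicit Defensive.
Import Order.TTheory GRing.Theory Num.Theory.
Local Open Scope ring_scope.

(* The ring of p-adic integers Z_p, built as the inverse limit              *)
(*   Z_p = lim_n  Z / p^n Z,                                                *)
(* i.e. sequences (x_n)_n of canonical residues x_n in [0, p^n) with        *)
(* x_n = x_(n+1) mod p^n.  As for mathcomp's 'Z_p, the modulus used is      *)
(* maxn p 2, so that the structure is a genuine (nonzero) ring for every p; *)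
(* for a prime p this is exactly Z_p.                                       *)

Section PadicIntegers.
Variable p : nat.

Definition zp_base : nat := maxn p 2.
Definition zp_md (n : nat) : int := (zp_base ^ n)%N%:Z.

Record padic_int := MkPadic {
  zps : nat -> int;
  zpsK : forall n, zps n = (zps n.+1 %% zp_md n)%Z }.

Lemma zp_md_dvd n : (zp_md n %| zp_md n.+1)%Z.
Proof.
rewrite /zp_md expnS; apply/dvdzP; exists (zp_base%:Z).
by rewrite -PoszM mulnC.
Qed.

Lemma modz_modz (a M m : int) : (m %| M)%Z -> ((a %% M)%Z %% m = a %% m)%Z.
Proof.
move=> /dvdzP [c ->].
rewrite [in RHS](divz_eq a (c * m)) mulrA modzMDl //.
Qed.

Definition zp_coh (f : nat -> int) := forall n, (f n.+1 = f n %[mod zp_md n])%Z.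

Lemma zp_coh_canon (f : nat -> int) (h : zp_coh f) n :
  (f n %% zp_md n = (f n.+1 %% zp_md n.+1)%Z %% zp_md n)%Z.
Proof. by rewrite modz_modz ?zp_md_dvd // h. Qed.

Definition zp_mk (f : nat -> int) (h : zp_coh f) : padic_int :=
  @MkPadic (fun n => f n %% zp_md n)%Z (zp_coh_canon h).

Lemma zp_eq (x y : padic_int) : zps x =1 zps y -> x = y.
Proof.
case: x y => [f hf] [g hg] /= /funext e; subst g.
by rewrite (Prop_irrelevance hf hg).
Qed.

Lemma zps_canon (x : padic_int) n : (zps x n %% zp_md n = zps x n)%Z.
Proof. by rewrite [in RHS]zpsK [in LHS]zpsK modz_mod. Qed.

Lemma zps_coh (x : padic_int) : zp_coh (zps x).
Proof. by move=> n; rewrite [in RHS]zpsK modz_mod. Qed.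

Lemma zp_mkE f h n : zps (@zp_mk f h) n = (f n %% zp_md n)%Z.
Proof. by []. Qed.

Lemma zp_coh_cst c : zp_coh (fun _ => c). Proof. by []. Qed.

Lemma zp_coh_add (x y : padic_int) : zp_coh (fun n => zps x n + zps y n).
Proof.
move=> n /=; rewrite -modzDml -modzDmr (zps_coh x n) (zps_coh y n).
by rewrite modzDml modzDmr.
Qed.

Lemma zp_coh_opp (x : padic_int) : zp_coh (fun n => - zps x n).
Proof. by move=> n /=; rewrite -modzNm (zps_coh x n) modzNm. Qed.

Lemma zp_coh_mul (x y : padic_int) : zp_coh (fun n => zps x n * zps y n).
Proof.
move=> n /=; rewrite -modzMml -modzMmr (zps_coh x n) (zps_coh y n).
by rewrite modzMml modzMmr.
Qed.

Definition zp_zero := zp_mk (zp_coh_cst 0).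
Definition zp_one := zp_mk (zp_coh_cst 1).
Definition zp_add x y := zp_mk (zp_coh_add x y).
Definition zp_opp x := zp_mk (zp_coh_opp x).
Definition zp_mul x y := zp_mk (zp_coh_mul x y).

HB.instance Definition _ := gen_eqMixin padic_int.
HB.instance Definition _ := gen_choiceMixin padic_int.

Lemma zp_addA : associative zp_add.
Proof.
move=> x y z; apply: zp_eq => n /=.
by rewrite modzDml modzDmr addrA.
Qed.

Lemma zp_addC : commutative zp_add.
Proof. by move=> x y; apply: zp_eq => n /=; rewrite addrC. Qed.

Lemma zp_add0 : left_id zp_zero zp_add.
Proof. by move=> x; apply: zp_eq => n /=; rewrite modzDml add0r zps_canon. Qed.

Lemma zp_addN : left_inverse zp_zero zp_opp zp_add.
Proof.
move=> x; apply: zp_eq => n /=.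
by rewrite modzDml addNr.
Qed.

HB.instance Definition _ :=
  GRing.isZmodule.Build padic_int zp_addA zp_addC zp_add0 zp_addN.

Lemma zp_mulA : associative zp_mul.
Proof.
move=> x y z; apply: zp_eq => n /=.
by rewrite modzMml modzMmr mulrA.
Qed.

Lemma zp_mulC : commutative zp_mul.
Proof. by move=> x y; apply: zp_eq => n /=; rewrite mulrC. Qed.

Lemma zp_mul1 : left_id zp_one zp_mul.
Proof. by move=> x; apply: zp_eq => n /=; rewrite modzMml mul1r zps_canon. Qed.

Lemma zp_mulDl : left_distributive zp_mul zp_add.
Proof.
move=> x y z; apply: zp_eq => n /=.
by rewrite modzMml modzDml modzDmr mulrDl.
Qed.

Lemma zp_one_neq0 : zp_one != zp_zero.
Proof.
apply/eqP => /(congr1 (fun x => zps x 1)) /=.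
rewrite /zp_md expn1 mod0z modz_small //.
by rewrite /zp_base ltz_nat (leq_trans _ (leq_maxr p 2)).
Qed.

HB.instance Definition _ :=
  GRing.Zmodule_isComNzRing.Build padic_int zp_mulA zp_mulC zp_mul1 zp_mulDl
    zp_one_neq0.

Definition zp_red (N : nat) (x : padic_int) : 'Z_(p ^ N) := (zps x N)%:~R.

End PadicIntegers.
Arguments zp_red : clear implicits.

Notation "''Z_[' p ']'" := (padic_int p) (format "''Z_[' p ]").

Unset Implicit Arguments.

Definition zp_cong (p j : nat) (a b : 'Z_[p]) : Prop :=
  exists c : 'Z_[p], a - b = (p%:R) ^+ j * c.

Definition zp_dvd (p j : nat) (a : 'Z_[p]) : Prop :=
  exists c : 'Z_[p], a = (p%:R) ^+ j * c.

Definition zp_poly_cong (p j : nat) (f g : {poly 'Z_[p]}) : Prop :=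
  forall i : nat, zp_cong p j f`_i g`_i.

Definition fABC (p : nat) (A B C : 'Z_[p]) : {poly 'Z_[p]} :=
  ('X ^+ 2 + (p%:R * A)%:P) ^+ 2 - ((p%:R : 'Z_[p]) ^+ 2)%:P * (B *: 'X + C%:P) ^+ 2.

Definition gBC (p : nat) (B C : 'Z_[p]) : {poly 'Z_[p]} :=
  ((p%:R : 'Z_[p]) ^+ 2)%:P * (B *: 'X + C%:P) ^+ 2.

Definition admissible (p k : nat) (B C : 'Z_[p]) : Prop :=
  zp_dvd p k B /\ ~ zp_dvd p k.+1 B /\ zp_dvd p k.+1 C.

(* Main.v *)
Require Import Defs.
From HB Require Import structures.
From mathcomp Require Import boolp.
From mathcomp Require Import all_boot all_order all_algebra.
From mathcomp Require Import ring zify.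
Import Order.TTheory GRing.Theory Num.Theory.
Local Open Scope ring_scope.

Section Seq.
Variable p : nat.
Hypothesis pp : prime p.
Local Notation P := (p%:R : 'Z_[p]).
Local Notation md := (zp_md p).

Lemma mdE n : md n = (p ^ n)%N%:Z.
Proof. by rewrite /zp_md /zp_base (maxn_idPl (prime_gt1 pp)). Qed.

Lemma zpsD (x y : 'Z_[p]) n : zps (x + y) n = ((zps x n + zps y n) %% md n)%Z.
Proof. by []. Qed.
Lemma zpsM (x y : 'Z_[p]) n : zps (x * y) n = ((zps x n * zps y n) %% md n)%Z.
Proof. by []. Qed.
Lemma zpsN (x : 'Z_[p]) n : zps (- x) n = ((- zps x n) %% md n)%Z.
Proof. by []. Qed.
Lemma zps0 n : zps (0 : 'Z_[p]) n = 0.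
Proof. by rewrite /= mod0z. Qed.
Lemma zps1 n : zps (1 : 'Z_[p]) n = (1 %% md n)%Z.
Proof. by []. Qed.

Lemma zps_nat m n : zps (m%:R : 'Z_[p]) n = (m%:Z %% md n)%Z.
Proof.
elim: m => [|m IH]; first by rewrite zps0 mod0z.
by rewrite -addn1 natrD zpsD IH zps1 modzDml modzDmr PoszD.
Qed.

Lemma zps_int z n : zps (z%:~R : 'Z_[p]) n = (z %% md n)%Z.
Proof.
case: z => m; first by rewrite zps_nat.
by rewrite NegzE mulrNz zpsN zps_nat modzNm.
Qed.
Lemma md_neq0 n : md n != 0.
Proof. by rewrite mdE eqz_nat expn_eq0 negb_and -lt0n prime_gt0. Qed.

Lemma zps_modle (x : 'Z_[p]) n j : (zps x (n + j) %% md n)%Z = zps x n.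
Proof.
elim: j => [|j IH]; first by rewrite addn0 zps_canon.
rewrite addnS -IH [zps x (n + j)]zpsK modz_modz //.
by rewrite !mdE /dvdz unfold_in /= dvdn_exp2l // leq_addr.
Qed.

Lemma D0 (x : 'Z_[p]) : zps x 1 = 0 -> zp_dvd p 1 x.
Proof.
move=> h1.
pose f n := (zps x n.+1 %/ p%:Z)%Z.
have Hd n : (f n * p%:Z)%R = zps x n.+1.
  apply: divzK; apply/dvdz_mod0P.
  by have := zps_modle x 1 n; rewrite add1n h1 mdE expn1.
have pn0 : p%:Z != 0 by rewrite eqz_nat -lt0n prime_gt0.
have coh : zp_coh p f.
  move=> n; apply/eqP; rewrite eqz_mod_dvd.
  rewrite -(dvdz_mul2r pn0) mulrBl !Hd.
  have e : (md n * p%:Z)%R = md n.+1 by rewrite !mdE -PoszM expnS mulnC.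
  rewrite e -eqz_mod_dvd; apply/eqP.
  by rewrite -zpsK zps_canon.
exists (zp_mk coh); rewrite expr1; apply: zp_eq => n.
rewrite zpsM zps_nat zp_mkE modzMml modzMmr mulrC Hd.
by rewrite -(zps_modle x n 1) addn1.
Qed.

Lemma Preg (x : 'Z_[p]) : P * x = 0 -> x = 0.
Proof.
move=> h; apply: zp_eq => n; rewrite zps0.
have : zps (P * x) n.+1 = 0 by rewrite h zps0.
rewrite zpsM zps_nat modzMml => /dvdz_mod0P.
have pn0 : p%:Z != 0 by rewrite eqz_nat -lt0n prime_gt0.
have e : md n.+1 = (p%:Z * md n)%R by rewrite !mdE -PoszM expnS.
rewrite e dvdz_mul2l // => /dvdz_mod0P.
by rewrite -(zps_modle x n 1) addn1.
Qed.

Lemma Unit (x : 'Z_[p]) : ~ zp_dvd p 1 x -> exists u v, x * u = 1 + P * v.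
Proof.
move=> nd.
have r0 : 0 <= zps x 1 by rewrite -zps_canon modz_ge0 // md_neq0.
have r1 : zps x 1 < p%:Z.
  have : (zps x 1 %% md 1 < md 1)%Z by rewrite ltz_pmod // mdE ltz_nat expn_gt0 prime_gt0.
  by rewrite zps_canon mdE expn1.
case e : (zps x 1) r0 r1 => [m|m] // _ r1.
have m0 : m != 0%N by apply/eqP => m0; apply: nd; apply: D0; rewrite e m0.
have cop : coprimez m%:Z p%:Z.
  rewrite coprimezE /= coprime_sym prime_coprime //.
  by apply/negP => /(dvdn_leq _); rewrite lt0n m0 => /(_ isT); rewrite leqNgt -ltz_nat r1.
have [[a b] /= hab] := coprimezP _ _ cop.
have [e' he'] : zp_dvd p 1 (x * a%:~R - 1).
  apply: D0; rewrite zpsD zpsM zps_int zpsN zps1 modzMmr modzDml modzDmr e.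
  have h1p : (1 %% p%:Z)%Z = 1 by rewrite modz_small // ltz_nat prime_gt1.
  rewrite mdE expn1 h1p.
  have -> : (m%:Z * a - 1 = - b * p%:Z)%R by rewrite -hab; ring.
  by rewrite modzMl.
exists a%:~R, e'; move: he'; rewrite expr1 => <-; ring.
Qed.
Lemma PregX n (x : 'Z_[p]) : P ^+ n * x = 0 -> x = 0.
Proof.
elim: n x => [|n IH] x; first by rewrite mul1r.
by rewrite exprS -mulrA => /Preg /IH.
Qed.

Lemma PcanX n (a b : 'Z_[p]) : P ^+ n * a = P ^+ n * b -> a = b.
Proof.
move=> h; apply/eqP; rewrite -subr_eq0; apply/eqP; apply: (PregX n).
by rewrite mulrBr h subrr.
Qed.

Lemma Lcan (w u v : 'Z_[p]) n x : w * u = 1 + P * v ->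
  (exists e, w * x = P ^+ n * e) -> exists y, x = P ^+ n * y.
Proof.
move=> hu; elim: n x => [|n IH] x [e he]; first by exists x; rewrite mul1r.
have [y hy] : exists y, x = P ^+ n * y by apply: IH; exists (P * e); rewrite he exprSr mulrA.
have hwy : w * y = P * e.
  by apply: (PcanX n); rewrite mulrCA -hy he exprSr -mulrA.
exists (e * u - v * y); rewrite hy exprSr -mulrA; congr (_ * _).
transitivity (y * (w * u - P * v)); first by rewrite hu addrK mulr1.
by rewrite mulrBr mulrA (mulrC y) hwy; ring.
Qed.

Lemma zps_cong N (a b c : 'Z_[p]) : a - b = P ^+ N * c -> zps a N = zps b N.
Proof.
move=> h; have -> : a = b + P ^+ N * c by rewrite -h addrC subrK.
rewrite zpsD zpsM -natrX zps_nat -mdE modzz mul0r mod0z addr0.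
by rewrite zps_canon.
Qed.

Lemma poly_cong N (f g q : {poly 'Z_[p]}) : f - g = (P ^+ N)%:P * q -> zp_poly_cong p N f g.
Proof.
by move=> h i; exists q`_i; rewrite -coefB h coefCM.
Qed.
Lemma ePN k j : P ^+ (2 * k + j) = P ^+ k * P ^+ k * P ^+ j.
Proof. by rewrite exprD mul2n -addnn exprD. Qed.

Lemma gBCE (A B C : 'Z_[p]) :
  gBC p B C = ('X ^+ 2 + (P * A)%:P) ^+ 2 - fABC p A B C.
Proof. rewrite /fABC /gBC; ring. Qed.

Lemma fE (A B C : 'Z_[p]) : fABC p A B C =
  'X ^+ 4 + (2 * P * A - P ^+ 2 * B ^+ 2)%:P * 'X ^+ 2
  + (- (2 * P ^+ 2 * B * C))%:P * 'X + (P ^+ 2 * (A ^+ 2 - C ^+ 2))%:P.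
Proof.
rewrite /fABC -!mul_polyC !(rmorphD, rmorphB, rmorphM, rmorphN, rmorphXn) /=.
rewrite !rmorph_nat; ring.
Qed.

Lemma fcoef0 (A B C : 'Z_[p]) : (fABC p A B C)`_0 = P ^+ 2 * (A ^+ 2 - C ^+ 2).
Proof. rewrite fE !coefE /=; ring. Qed.
Lemma fcoef2 (A B C : 'Z_[p]) : (fABC p A B C)`_2 = 2 * P * A - P ^+ 2 * B ^+ 2.
Proof. rewrite fE !coefE /=; ring. Qed.
Lemma cong2 k (A' b c d u v : 'Z_[p]) : b * u = 1 + P * v ->
  zp_poly_cong p (2 * k + 4)
   (fABC p (A' + P ^+ (2 * k + 2) * d) (P ^+ k * b) (P ^+ k.+1 * c))
   (fABC p A' (P ^+ k * b + P ^+ k.+1 * (- (d * u))) (P ^+ k.+1 * c)).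
Proof.
move=> huv i; rewrite /zp_cong !ePN !(exprSr P k); set Pk := P ^+ k.
rewrite !fE !coefE.
have E : forall K : 'Z_[p], K * (1 + P * v - b * u) = 0 by move=> K; rewrite huv subrr mulr0.
case: i => [|[|[|[|[|i]]]]] /=.
- exists (d * (2 * A' + Pk * Pk * P ^+ 2 * d)); ring.
- exists (2 * c * (- (d * u))); ring.
- exists (- (2 * d * v) + (d * u) ^+ 2).
  transitivity (Pk * Pk * P ^+ 4 * (- (2 * d * v) + (d * u) ^+ 2)
     + (2 * Pk * Pk * P ^+ 3 * d) * (1 + P * v - b * u)); first ring.
  by rewrite E addr0.
- by exists 0; ring.
- by exists 0; ring.
- by exists 0; ring.
Qed.
Lemma part1 k (p_odd : odd p) (A A' B C B' C' : 'Z_[p]) :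
  admissible p k B C -> admissible p k B' C' ->
  ~ zp_dvd p 1 (A ^+ 2 - C ^+ 2) ->
  zp_poly_cong p (2 * k + 4)%N (fABC p A B C) (fABC p A' B' C') ->
  zp_cong p (2 * k + 2)%N A A'.
Proof.
move=> [[b hb] [_ [c hc]]] [[b' hb'] [_ [c' hc']]] nX H.
have [e2 h2] := H 2%N; have [e0 h0] := H 0%N.
rewrite !fcoef2 in h2; rewrite !fcoef0 in h0.
have [u0 [v0 huv0]] := Unit _ nX.
have h2P : 2 * ((p./2).+1)%:R = 1 + P :> 'Z_[p].
  have en : (2 * (p./2).+1 = 1 + p)%N.
    move: (odd_double_half p); rewrite p_odd => ep.
    rewrite -{2}ep -mul2n; lia.
  by rewrite -natrM en natrD.
set h := ((p./2).+1)%:R : 'Z_[p].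
rewrite hb hb' hc hc' !ePN !(exprSr P k) in h2 h0 huv0.
have hD1 : 2 * (A - A') = P ^+ (2 * k + 1) * (b ^+ 2 - b' ^+ 2 + P ^+ 2 * e2).
  rewrite ePN expr1; apply: (PcanX 1); rewrite expr1.
  transitivity ((2 * P * A - P ^+ 2 * ((P ^+ k) * b) ^+ 2) - (2 * P * A' - P ^+ 2 * ((P ^+ k) * b') ^+ 2)
     + P ^+ 2 * (P ^+ k) ^+ 2 * (b ^+ 2 - b' ^+ 2)); first ring.
  rewrite h2; ring.
have h2P' : 2 * h = 1 + P * 1 by rewrite mulr1.
have [G hG] := Lcan 2 h 1 (2 * k + 1)%N (A - A') h2P' (ex_intro _ _ hD1).
rewrite ePN expr1 in hG.
have hW : (A + A') * (A - A') = P ^+ (2 * k + 2) * (e0 + c ^+ 2 - c' ^+ 2).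
  rewrite ePN; apply: (PcanX 2).
  transitivity (P ^+ 2 * (A ^+ 2 - ((P ^+ k) * P * c) ^+ 2) - P ^+ 2 * (A' ^+ 2 - ((P ^+ k) * P * c') ^+ 2)
     + P ^+ 2 * ((P ^+ k) * P) ^+ 2 * (c ^+ 2 - c' ^+ 2)); first ring.
  rewrite h0; ring.
have eA' : A' = A - (P ^+ k) * (P ^+ k) * P * G by rewrite -hG; ring.
set v1 := v0 + (P ^+ k) ^+ 2 * P * c ^+ 2 * u0 + (1 + P * v0 + (P ^+ k) ^+ 2 * P ^+ 2 * c ^+ 2 * u0)
   - (P ^+ k) ^+ 2 * G * A * u0 * h.
have hw : (A + A') * (A * u0 * h) = 1 + P * v1.
  rewrite eA'.
  transitivity (1 + P * v1 + (1 + P) * ((A ^+ 2 - ((P ^+ k) * P * c) ^+ 2) * u0 - 1 - P * v0)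
     + A ^+ 2 * u0 * (2 * h - 1 - P)); first (rewrite /v1; ring).
  rewrite huv0 h2P; ring.
exact: (Lcan (A + A') (A * u0 * h) v1 (2 * k + 2)%N (A - A') hw
   (ex_intro _ _ hW)).
Qed.
Lemma coefQ (Q f1 f2 f : {poly 'Z_[p]}) i :
  (Q - f1)`_i - (Q - f2)`_i = (f`_i - f1`_i) - (f`_i - f2`_i).
Proof. rewrite !coefB; ring. Qed.

Lemma part2 k (A A' B C : 'Z_[p]) :
     admissible p k B C -> ~ zp_dvd p 1 (A ^+ 2 - C ^+ 2) ->
     zp_cong p (2 * k + 2)%N A A' ->
     exists! h : {poly 'Z_(p ^ (2 * k + 4))},
       exists B' C' : 'Z_[p],
         [/\ admissible p k B' C',
             map_poly (zp_red p (2 * k + 4)%N) (gBC p B' C') = h &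
             zp_poly_cong p (2 * k + 4)%N (fABC p A B C) (fABC p A' B' C')].
Proof.
move=> [[b hb] [nB [c hc]]] nX [d hd].
have nb : ~ zp_dvd p 1 b.
  by move=> [e he]; apply: nB; exists e; rewrite hb he mulrA -exprD addn1.
have [u [v huv]] := Unit _ nb.
have eA : A = A' + P ^+ (2 * k + 2) * d by rewrite -hd; ring.
pose B' := P ^+ k * b + P ^+ k.+1 * (- (d * u)).
have hcong : zp_poly_cong p (2 * k + 4)%N (fABC p A B C) (fABC p A' B' C).
  rewrite eA hb hc /B'; exact (cong2 k A' b c d u v huv).
exists (map_poly (zp_red p (2 * k + 4)%N) (gBC p B' C)); split.
  exists B', C; split => //.
  split; last (split; last by exists c).
    by exists (b + P * (- (d * u))); rewrite /B' exprSr; ring.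
  move=> [e he]; apply: nB; exists (e - (- (d * u))).
  move: he; rewrite hb /B' !exprSr => he.
  transitivity ((P ^+ k * b + P ^+ k * P * - (d * u)) - P ^+ k * P * - (d * u)); first ring.
  rewrite he; ring.
move=> h' [B2 [C2 [_ <- hc2]]].
have z0 : zp_red p (2 * k + 4)%N 0 = 0 by rewrite /zp_red zps0.
apply/polyP => i; rewrite !coef_map_id0 //.
rewrite /zp_red; congr (_ %:~R).
have [e1 he1] := hcong i; have [e2 he2] := hc2 i.
apply: (zps_cong _ _ _ (e1 - e2)).
rewrite (gBCE A' B' C) (gBCE A' B2 C2) (coefQ _ _ _ (fABC p A B C)) he1 he2; ring.
Qed.
End Seq.

Theorem claim5 (p k : nat) (p_prime : prime p) (p_odd : odd p) :
  (forall A A' B C B' C' : 'Z_[p],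
     admissible p k B C -> admissible p k B' C' ->
     ~ zp_dvd p 1 (A ^+ 2 - C ^+ 2) -> ~ zp_dvd p 1 (A' ^+ 2 - C' ^+ 2) ->
     zp_poly_cong p (2 * k + 4)%N (fABC p A B C) (fABC p A' B' C') ->
     zp_cong p (2 * k + 2)%N A A')
  /\
  (forall A A' B C : 'Z_[p],
     admissible p k B C -> ~ zp_dvd p 1 (A ^+ 2 - C ^+ 2) ->
     zp_cong p (2 * k + 2)%N A A' ->
     exists! h : {poly 'Z_(p ^ (2 * k + 4))},
       exists B' C' : 'Z_[p],
         [/\ admissible p k B' C',
             map_poly (zp_red p (2 * k + 4)%N) (gBC p B' C') = h &
             zp_poly_cong p (2 * k + 4)%N (fABC p A B C) (fABC p A' B' C')]).
Proof.
split.
  move=> A A' B C B' C' h1 h2 h3 _ h5; exact (part1 p p_prime k p_odd A A' B C B' C' h1 h2 h3 h5).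
move=> A A' B C h1 h2 h3; exact (part2 p p_prime k A A' B C h1 h2 h3).
Qed.
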